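(* Under the setting and Assumption 1 described in the context, in the limit $M\gg 1$ (leading order as $M\to\infty$ with $L$, $C$, $T$ and all $\alpha_l$ fixed), the arithmetic mean $m_\lambda:=\frac1P\sum_{i=1}^P\lambda_i$ of the eigenvalues $\lambda_1,\dots,\lambda_P$ of the empirical FIM $F$ satisfies $$ m_\lambda = C\,\frac{\kappa_1}{M},\qquad \kappa_1:=\sum_{l=1}^{L}\frac{\alpha_{l-1}}{\alpha}\,\tilde q^{\,l}\,\hat q^{\,l-1},\qquad \alpha:=\sum_{l=1}^{L-1}\alpha_l\alpha_{l-1}. $$ In particular $m_\lambda=O(1/M)$, since $\kappa_1$ does not depend on $M$.
   Context: Network: a fully connected feedforward network with $L\ge 2$ layers of weights. Layer widths are $M_l=\alpha_l M$ for $l=0,1,\dots,L-1$ (layer $0$ is the input, with $M_0$ units), where the $\alpha_l>0$ are fixed constants and $M$ is a large parameter. The output layer has $M_L=C$ units, with $C$ a fixed constant. Forward pass: $h^0_i=x_i$; for $l=1,\dots,L$, $u^l_i=\sum_{j=1}^{M_{l-1}}W^l_{ij}h^{l-1}_j+b^l_i$; for $l\le L-1$, $h^l_i=\phi(u^l_i)$; the output is linear, $f_{\theta,k}(x)=u^L_k$ for $k=1,\dots,C$. The activation $\phi$ and its derivative $\phi'$ are square integrable with respect to the standard Gaussian measure. The parameter vector $\theta=\{W^l_{ij},b^l_i\}$ has total dimension $P$; to leading order $P=\alpha M^2$ with $\alpha:=\sum_{l=1}^{L-1}\alpha_l\alpha_{l-1}$. Random parameters: the entries are independent with $W^l_{ij}\sim\mathcal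 N(0,\sigma_w^2/M_{l-1})$ and $b^l_i\sim\mathcal N(0,\sigma_b^2)$, where $\sigma_w>0$ and $\sigma_b>0$; the parameters are then held fixed. Inputs: $T$ samples $x(t)\in\mathbb R^{M_0}$, $t=1,\dots,T$, with i.i.d. standard Gaussian entries. Empirical FIM: $F=\frac1T\sum_{t=1}^T\sum_{k=1}^C\nabla_\theta f_{\theta,k}(x(t))\,\nabla_\theta f_{\theta,k}(x(t))^{\top}$. This is a $P\times P$ positive semidefinite matrix with eigenvalues $\lambda_1,\dots,\lambda_P\ge 0$. Backpropagated signals: $\delta^l_{k,i}:=\partial f_{\theta,k}/\partial u^l_i$. These satisfy $\delta^L_{k,i}=1$ if $i=k$ and $0$ otherwise, and $\delta^l_{k,i}=\phi'(u^l_i)\sum_j\delta^{l+1}_{k,j}W^{l+1}_{ji}$. The weight gradients are $\partial f_{\theta,k}/\partial W^l_{ij}=\delta^l_{k,i}h^{l-1}_j$. Macroscopic variables: let $Du$ denote the standard Gaussian measure. For $a>0$, $|b|\le a$ and $c=b/a$, define $$I_\psi[a,b]=\int Dz_1Dz_2\,\psi(\sqrt a z_1)\,\psi\big(\sqrt a(cz_1+\sqrt{1-c^2}z_2)\big).$$ Set $\hat q^0=1$ and $\hat q^0_{st}=0$. For $l=0,\dots,L-1$: - $q^{l+1}=\sigma_w^2\hat q^l+\sigma_b^2$ and $\hat q^{l+1}=\int Du\,\phi^2(\sqrt{q^{l+1}}u)$; - $q^{l+1}_{st}=\sigma_w^2\hat q^l_{st}+\sigma_b^2$ and $\hat q^{l+1}_{st}=I_\phi[q^{l+1},q^{l+1}_{st}]$.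 Backward variables: set $\tilde q^L=\tilde q^L_{st}=1$. For $l=L-1,\dots,1$: - $\tilde q^l=\sigma_w^2\tilde q^{l+1}\int Du\,[\phi'(\sqrt{q^l}u)]^2$; - $\tilde q^l_{st}=\sigma_w^2\tilde q^{l+1}_{st}\,I_{\phi'}[q^l,q^l_{st}]$. In the large-$M$ limit, these describe $\frac1{M_l}\sum_i h^l_i(t)^2\to\hat q^l$, $\frac1{M_l}\sum_ih^l_i(s)h^l_i(t)\to\hat q^l_{st}$ ($s\ne t$), $\sum_i\delta^l_{k,i}(t)^2\to\tilde q^l$ and $\sum_i\delta^l_{k,i}(s)\delta^l_{k,i}(t)\to\tilde q^l_{st}$ ($s\ne t$). Assumption 1 (gradient independence): when evaluating the backpropagated quantities $\tilde q^l$ and $\tilde q^l_{st}$, the parameters in the backward chain may be treated as an independent copy of those in the forward chain. Consequently, the backward recurrences above hold. *)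

(* Defs.v *)
From HB Require Import structures.
From mathcomp Require Import all_boot all_order all_algebra.
From mathcomp Require Import all_classical all_reals all_analysis.
Set Implicit Arguments. Unset Strict Implicit. Unset Printing Implicit Defensive.
Import Order.TTheory GRing.Theory Num.Theory.
Import numFieldNormedType.Exports.
Local Open Scope classical_set_scope.
Local Open Scope ring_scope.

Definition gauss_int {R : realType} (g : R -> R) : R :=
  \int[@lebesgue_measure R]_(u in setT) (g u * normal_pdf 0 1 u).

Definition gauss_sq_integrable {R : realType} (g : R -> R) : Prop :=
  measurable_fun setT g /\
  (@lebesgue_measure R).-integrable setT (fun u => (g u ^+ 2 * normal_pdf 0 1 u)%:E).

(** Layers are numbered 0..L; width l = M_l (width 0 = M_0 input, width L = C).
   W l i j = W^l_{ij} (l = 1..L, i < width l, j < width (l-1)), b l i = b^l_i,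
   x t j = x_j(t).  Indices out of range are simply never used. *)
Section Network.
Variables (R : realType) (L : nat) (width : nat -> nat) (phi dphi : R -> R)
  (W : nat -> nat -> nat -> R) (b : nat -> nat -> R) (x : nat -> nat -> R).

Fixpoint hid (t : nat) (l : nat) : nat -> R :=
  match l with
  | 0 => x t
  | l'.+1 => fun i => phi (\sum_(j < width l') W l'.+1 i j * hid t l' j + b l'.+1 i)
  end.

Definition pre (t l i : nat) : R :=
  \sum_(j < width l.-1) W l i j * hid t l.-1 j + b l i.

(* backpropagated signals, indexed by the distance j = L - l from the output:
   delta^L_{k,i} = [i = k],
   delta^l_{k,i} = phi'(u^l_i) sum_m delta^{l+1}_{k,m} W^{l+1}_{m i}. *)
Fixpoint dback (t k : nat) (j : nat) : nat -> R :=
  match j with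
  | 0 => fun i => if i == k then 1 else 0
  | j'.+1 => fun i => dphi (pre t (L - j'.+1) i) *
        \sum_(m < width (L - j')) dback t k j' m * W (L - j') m i
  end.

Definition delta (t k l : nat) : nat -> R := dback t k (L - l).

(* parameter index set: for layer l+1 (l : 'I_L), either a weight (i,j) or a bias i *)
Definition pidx : finType :=
  {l : 'I_L & ('I_(width l.+1) * 'I_(width l) + 'I_(width l.+1))%type}.

Definition nparams : nat := #|pidx|.

(* gradient of f_k(x(t)) w.r.t. the parameter p *)
Definition grad (t k : nat) (p : pidx) : R :=
  match tagged p with
  | inl ij => delta t k (tag p).+1 ij.1 * hid t (tag p) ij.2
  | inr i => delta t k (tag p).+1 i
  end.

Definition FIM (T : nat) : 'M[R]_nparams :=
  \matrix_(a < nparams, c < nparams)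
    (T%:R^-1 * \sum_(t < T) \sum_(k < width L)
        grad t k (enum_val a) * grad t k (enum_val c)).

End Network.

Section Macro.
Variables (R : realType) (L : nat) (sw sb : R) (phi dphi : R -> R).

Fixpoint qhat (l : nat) : R :=
  match l with
  | 0 => 1
  | l'.+1 => gauss_int (fun u => phi (Num.sqrt (sw ^+ 2 * qhat l' + sb ^+ 2) * u) ^+ 2)
  end.

Definition qpre (l : nat) : R := sw ^+ 2 * qhat l.-1 + sb ^+ 2.

(* tilde q, indexed by distance j = L - l from the output *)
Fixpoint qtback (j : nat) : R :=
  match j with
  | 0 => 1
  | j'.+1 => sw ^+ 2 * qtback j' *
      gauss_int (fun u => dphi (Num.sqrt (qpre (L - j'.+1)) * u) ^+ 2)
  end.

Definition qtilde (l : nat) : R := qtback (L - l).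

Definition alpha_sum (alpha : nat -> R) : R :=
  \sum_(1 <= l < L) alpha l * alpha l.-1.

Definition kappa1 (alpha : nat -> R) : R :=
  \sum_(1 <= l < L.+1) alpha l.-1 / alpha_sum alpha * qtilde l * qhat l.-1.

End Macro.

(* Main.v *)
Require Import Defs.
From HB Require Import structures.
From mathcomp Require Import all_boot all_order all_algebra.
From mathcomp Require Import all_classical all_reals all_analysis.
Import Order.TTheory GRing.Theory Num.Theory.
Import numFieldNormedType.Exports.
Local Open Scope classical_set_scope.
Local Open Scope ring_scope.
From mathcomp.algebra_tactics Require Import ring.

Lemma sum_eig_tr {R : comNzRingType} {n} {A : 'M[R]_n} {s : seq R} :
  char_poly A = \prod_(z <- s) ('X - z%:P) -> \sum_(z <- s) z = \tr A.
Proof.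
move=> E.
have Hs : size s = n.
  have := size_char_poly A; rewrite E size_prod_XsubC; by case.
case: n A E Hs => [|n] A E Hs.
  by case: s E Hs => // _ _; rewrite big_nil /mxtrace big_ord0.
apply: oppr_inj; rewrite -coefPn_prod_XsubC ?Hs // -E.
by rewrite char_poly_trace.
Qed.

Lemma tr_FIM (R : realType) L w phi dphi W b x T :
  \tr (FIM (R:=R) L w phi dphi W b x T) = T%:R^-1 * \sum_(t < T) \sum_(k < w L)
     \sum_(p : pidx L w) @grad R L w phi dphi W b x t k p ^+ 2.
Proof.
rewrite /mxtrace.
under eq_bigr do rewrite mxE.
rewrite -mulr_sumr; congr (_ * _).
rewrite exchange_big /=.
apply: eq_bigr => t _; rewrite exchange_big /=; apply: eq_bigr => k _.
rewrite /nparams -(big_enum_val (fun p : pidx L w => @grad R L w phi dphi W b x t k p ^+ 2)).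
by apply: eq_bigr => p _; rewrite expr2.
Qed.

Lemma sum_grad (R : realType) L w phi dphi W b x t k :
  \sum_(p : pidx L w) @grad R L w phi dphi W b x t k p ^+ 2 =
  \sum_(l < L) (\sum_(i < w l.+1) delta L w phi dphi W b x t k l.+1 i ^+ 2) *
     (\sum_(j < w l) hid w phi W b x t l j ^+ 2 + 1).
Proof.
pose J := fun l : 'I_L => ('I_(w l.+1) * 'I_(w l) + 'I_(w l.+1))%type.
transitivity (\sum_(p : pidx L w | true && true)
   @grad R L w phi dphi W b x t k (Tagged J (tagged p)) ^+ 2).
  by apply: eq_bigr => -[l q].
rewrite -(@sig_big_dep R 0 +%R 'I_L J (fun _ => true) (fun _ _ => true)
   (fun l q => @grad R L w phi dphi W b x t k (Tagged J q) ^+ 2)) /=.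
apply: eq_bigr => l _.
rewrite big_sumType /= mulrDr mulr1; congr (_ + _).
  rewrite (eq_bigr (fun p : 'I_(w l.+1) * 'I_(w l) => (delta L w phi dphi W b x t k l.+1 p.1 ^+ 2) * (hid w phi W b x t l p.2 ^+ 2))); last first.
    by move=> [i j] _; rewrite /grad /= exprMn.
  by rewrite big_distrlr /= pair_bigA.
Qed.

Lemma card_pidx (R : realType) L w :
  ((nparams L w)%:R : R) = \sum_(l < L) ((w l.+1)%:R * (w l)%:R + (w l.+1)%:R).
Proof.
rewrite /nparams /pidx card_tagged sumnE big_map big_enum /= natr_sum.
apply: eq_bigr => l _.
by rewrite card_sum card_prod !card_ord natrD natrM.
Qed.

Lemma cvg_sumI (R : realType) (I : finType) (f : I -> nat -> R) (a : I -> R) :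
  (forall i, f i n @[n --> \oo] --> a i) ->
  \sum_i f i n @[n --> \oo] --> \sum_i a i.
Proof.
move=> H; apply: cvg_big => //; exact: add_continuous.
Qed.

Lemma Minv0 (R : realType) (Mn : nat -> nat) :
  ((Mn n)%:R : R) @[n --> \oo] --> +oo -> ((Mn n)%:R^-1 : R) @[n --> \oo] --> 0.
Proof.
move=> H.
have Hp : \forall n \near \oo, (0 : R) < (Mn n)%:R by move/cvgryPgt: H; apply.
exact: ((gtr0_cvgV0 (f := fun n => ((Mn n)%:R : R)) Hp).2 H).
Qed.

Lemma div_split (R : realType) (a : nat) (s m : R) :
  (a = 0%N -> s = 0) -> s / m = a%:R / m * (a%:R^-1 * s).
Proof.
case: a => [|a] H; first by rewrite H // !mul0r ?mulr0.
have ha : (a.+1%:R : R) != 0 by rewrite pnatr_eq0.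
by rewrite [a.+1%:R / m]mulrC -mulrA (mulrA a.+1%:R) mulfV // mul1r mulrC.
Qed.

Lemma final_alg (R : realType) (s m p : R) :
  m != 0 -> s / m * (p / m ^+ 2)^-1 = m * (s / p).
Proof.
move=> hm; have [->|hp] := eqVneq p 0.
  by rewrite !mul0r invr0 !mulr0.
by field; rewrite hm hp.
Qed.

Theorem theorem1 (R : realType) (L C T : nat) (alpha : nat -> R) (sw sb : R)
  (phi dphi : R -> R)
  (width : nat -> nat -> nat) (Mn : nat -> nat)
  (W : nat -> nat -> nat -> nat -> R) (b : nat -> nat -> nat -> R)
  (x : nat -> nat -> nat -> R) (lam : nat -> seq R) :
  (2 <= L)%N -> (0 < C)%N -> (0 < T)%N ->
  (forall l, (l < L)%N -> 0 < alpha l) -> 0 < sw -> 0 < sb ->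
  gauss_sq_integrable phi -> gauss_sq_integrable dphi ->
  {ae @lebesgue_measure R, forall u : R, is_derive u (1 : R) phi (dphi u)} ->
  (forall n, width n L = C) ->
  ((Mn n)%:R : R) @[n --> \oo] --> +oo ->
  (forall l, (l < L)%N ->
     ((width n l)%:R / (Mn n)%:R : R) @[n --> \oo] --> alpha l) ->
  (* macroscopic limits of the forward signals *)
  (forall t l, (t < T)%N -> (l < L)%N ->
     ((width n l)%:R^-1 *
        \sum_(i < width n l) hid (width n) phi (W n) (b n) (x n) t l i ^+ 2)
       @[n --> \oo] --> qhat sw sb phi l) ->
  (* macroscopic limits of the backpropagated signals (Assumption 1) *)
  (forall t k l, (t < T)%N -> (k < C)%N -> (1 <= l <= L)%N ->
     (\sum_(i < width n l)
        delta L (width n) phi dphi (W n) (b n) (x n) t k l i ^+ 2)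
       @[n --> \oo] --> qtilde L sw sb phi dphi l) ->
  (* lam n : the eigenvalues (with multiplicity) of the empirical FIM *)
  (forall n, char_poly (FIM L (width n) phi dphi (W n) (b n) (x n) T)
               = \prod_(z <- lam n) ('X - z%:P)) ->
  ((Mn n)%:R * ((\sum_(z <- lam n) z) / (nparams L (width n))%:R))
    @[n --> \oo] --> C%:R * kappa1 L sw sb phi dphi alpha.
Proof.
move=> hL hC hT halpha hsw hsb _ _ _ hwL hM hw hq hd hlam.
have hMi := @Minv0 R Mn hM.
have hMp : \forall n \near \oo, (0:R) < (Mn n)%:R by move/cvgryPgt: hM; apply.
pose Sh n t l := \sum_(j < width n l) hid (width n) phi (W n) (b n) (x n) t l j ^+ 2.
pose Sd n t k l := \sum_(i < width n l)
   delta L (width n) phi dphi (W n) (b n) (x n) t k l i ^+ 2.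
pose alpha' j := if (j < L)%N then alpha j else 0.
pose X := \sum_(l < L) qtilde L sw sb phi dphi l.+1 * (alpha l * qhat sw sb phi l).
pose AS := alpha_sum L alpha.
have htr : forall n, \sum_(z <- lam n) z = T%:R^-1 * \sum_(t < T) \sum_(k < C)
     \sum_(l < L) Sd n t k l.+1 * (Sh n t l + 1).
  move=> n; rewrite (sum_eig_tr (hlam n)) tr_FIM hwL; congr (_ * _).
  apply: eq_bigr => t _; apply: eq_bigr => k _; exact: sum_grad.
have hA : ((\sum_(z <- lam n) z) / (Mn n)%:R) @[n --> \oo] -->
    T%:R^-1 * \sum_(t < T) \sum_(k < C) X.
  have E : forall n, (\sum_(z <- lam n) z) / (Mn n)%:R = T%:R^-1 * \sum_(t < T)
      \sum_(k < C) \sum_(l < L) Sd n t k l.+1 * ((width n l)%:R / (Mn n)%:R *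
        ((width n l)%:R^-1 * Sh n t l) + ((Mn n)%:R)^-1).
    move=> n; rewrite htr -mulrA; congr (_ * _).
    rewrite mulr_suml; apply: eq_bigr => t _; rewrite mulr_suml.
    apply: eq_bigr => k _; rewrite mulr_suml; apply: eq_bigr => l _.
    rewrite -mulrA mulrDl mul1r -div_split //.
    by rewrite /Sh => ->; rewrite big_ord0.
  under eq_cvg do rewrite E.
  apply: cvgMl_tmp; apply: cvg_sumI => t; apply: cvg_sumI => k.
  rewrite /X; under [X in _ --> X]eq_bigr do rewrite -[_ * qhat _ _ _ _]addr0.
  apply: cvg_sumI => l.
  apply: cvgM; first by apply: hd => //; rewrite ltn_ord.
  apply: cvgD => //; apply: cvgM; first exact: hw.
  exact: hq.
have hw' : forall j, (j <= L)%N ->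
    ((width n j)%:R / (Mn n)%:R : R) @[n --> \oo] --> alpha' j.
  move=> j; rewrite leq_eqVlt => /orP[/eqP ->|hj].
    have h0 : ((C%:R : R) * (Mn n)%:R^-1) @[n --> \oo] --> (C%:R * 0 : R).
      by apply: cvgMl_tmp.
    rewrite mulr0 in h0; rewrite /alpha' ltnn.
    have -> : (fun n => ((width n L)%:R / (Mn n)%:R : R)) =
      (fun n => C%:R * (Mn n)%:R^-1) by apply: funext => n; rewrite hwL.
    exact: h0.
  by rewrite /alpha' hj; exact: hw.
have hB : ((nparams L (width n))%:R / ((Mn n)%:R ^+ 2)) @[n --> \oo] --> AS.
  have E : forall n, ((nparams L (width n))%:R / ((Mn n)%:R ^+ 2) : R) =
      \sum_(l < L) ((width n l.+1)%:R / (Mn n)%:R * ((width n l)%:R / (Mn n)%:R)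
        + (width n l.+1)%:R / (Mn n)%:R * ((Mn n)%:R)^-1).
    move=> n; rewrite card_pidx mulr_suml; apply: eq_bigr => l _.
    by rewrite mulrDl expr2 invfM; congr (_ + _); [rewrite mulrACA | rewrite mulrA].
  under eq_cvg do rewrite E.
  have -> : AS = \sum_(l < L) (alpha' l.+1 * alpha l + alpha' l.+1 * 0).
    have [L' hL'] : exists L', L = L'.+1 by exists L.-1; rewrite prednK // ltnW.
    have hz : alpha' L'.+1 = 0 by rewrite /alpha' hL' ltnn.
    rewrite /AS /alpha_sum hL' big_ord_recr /= hz mul0r mulr0 !addr0.
    rewrite big_add1 /= big_mkord; apply: eq_bigr => i _.
    by rewrite /alpha' hL' ltnS ltn_ord mulr0 addr0.
  apply: cvg_sumI => l.
  apply: cvgD; (apply: cvgM; first by apply: hw'; rewrite ltn_ord).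
    by apply: hw; rewrite ltn_ord.
  done.
have hAS : 0 < AS.
  have [L' hL'] : exists L', L = L'.+2.
    by exists L.-2; move: hL; case: (L) => [|[|l]].
  rewrite /AS /alpha_sum big_add1 /= big_mkord hL' big_ord_recl /=.
  have h1 : 0 < alpha 1%N * alpha 0%N by rewrite mulr_gt0 // halpha // hL'.
  have h2 : 0 <= \sum_(i < L') alpha (bump 0 i).+1 * alpha (bump 0 i).
    apply: sumr_ge0 => i _; rewrite mulr_ge0 // ltW // halpha // hL' /bump /=.
      by rewrite !ltnS ltn_ord.
    by rewrite ltnS ltnW // ltnS ltn_ord.
  by apply: (lt_le_trans h1); rewrite lerDl.
have hK : C%:R * kappa1 L sw sb phi dphi alpha =
    (T%:R^-1 * \sum_(t < T) \sum_(k < C) X) * AS^-1.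
  rewrite !sumr_const !card_ord -[X *+ C *+ T]mulr_natl mulrA mulVf ?pnatr_eq0 -?lt0n //.
  rewrite mul1r -[X *+ C]mulr_natl -mulrA; congr (_ * _).
  rewrite /kappa1 /X /AS (big_add1 _ _ 0%N) /= big_mkord mulr_suml; apply: eq_bigr => l _.
  ring.
rewrite hK.
have E3 : \forall n \near \oo,
    ((\sum_(z <- lam n) z) / (Mn n)%:R) * ((nparams L (width n))%:R / ((Mn n)%:R ^+ 2))^-1
    = (Mn n)%:R * ((\sum_(z <- lam n) z) / (nparams L (width n))%:R).
  near=> n; apply: final_alg; apply: lt0r_neq0; near: n; exact: hMp.
apply: cvg_trans (near_eq_cvg E3) _.
apply: cvgM; first exact: hA.
by apply: cvgV => //; exact: lt0r_neq0.
Unshelve. all: by end_near. Qed.
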